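(* For every positive integer $t$, every $t$-spike $Q$ with an associated $t$-spike partition $(B_1,\dots,B_t;C_1,\dots,C_t)$, and every labeling $L$ of $Q$ for which there exist distinct $p,q$ with $L(b)=p$ for all $b\in B_1\cup\dots\cup B_t$ and $L(c)=q$ for all $c\in C_1\cup\dots\cup C_t$, we have $\mathrm{cwd}(Q,L)\le 4$.
   Context: Graphs are finite and simple. For disjoint vertex sets $X,Y$, $X$ is complete (anticomplete) to $Y$ if every vertex of $X$ is adjacent (nonadjacent) to every vertex of $Y$. A $t$-spike is a graph $Q$ whose vertex set can be partitioned into nonempty cliques $B_1,\dots,B_t,C_1,\dots,C_t$ such that the $B_i$ are pairwise anticomplete, the $C_i$ are pairwise complete, $B_i$ is anticomplete to $C_j$ for all $i\ne j$, and for each $i$, $B_i$ can be ordered $b^i_1,\dots,b^i_{r_i}$ so that $N_Q(b^i_{r_i})\cap C_i\subseteq\dots\subseteq N_Q(b^i_1)\cap C_i$; $(B_1,\dots,B_t;C_1,\dots,C_t)$ is then a $t$-spike partition. A labeling of $Q$ is any function with domain $V(Q)$, and $(Q,L)$ is a labeled graph. The clique-width $\mathrm{cwd}(Q,L)$ is the minimum number of labels needed to construct $Q$ with final labeling exactly $L$ using: (1) creation of a new vertex with label $i$; (2) disjoint union of two labeled graphs; (3) joining by an edge every vertex labeled $i$ to every vertex labeled $j$ ($i\ne j$); (4) renaming label $i$ to label $j$. *)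

(* Defs.v *)
From mathcomp Require Import all_boot.
Set Implicit Arguments. Unset Strict Implicit. Unset Printing Implicit Defensive.

Section GraphDefs.
Variables (T : finType) (adj : rel T).

Definition complete (X Y : {set T}) : Prop :=
  forall x y, x \in X -> y \in Y -> adj x y.
Definition anticomplete (X Y : {set T}) : Prop :=
  forall x y, x \in X -> y \in Y -> ~~ adj x y.
Definition is_clique (X : {set T}) : Prop :=
  forall x y, x \in X -> y \in X -> x != y -> adj x y.
Definition nbhd (v : T) : {set T} := [set u | adj v u].

Definition is_spike_partition (t : nat) (B C : 'I_t -> {set T}) : Prop :=
  (forall i, B i != set0 /\ C i != set0 /\ is_clique (B i) /\ is_clique (C i)) /\
  (forall x : T, exists i, (x \in B i) || (x \in C i)) /\
  (forall i j, i != j -> [disjoint B i & B j] /\ [disjoint C i & C j]) /\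
  (forall i j, [disjoint B i & C j]) /\
  (forall i j, i != j ->
     anticomplete (B i) (B j) /\ complete (C i) (C j) /\ anticomplete (B i) (C j)) /\
  (forall i, exists s : seq T, uniq s /\ s =i B i /\
     forall x y, x \in s -> y \in s -> index x s <= index y s ->
       nbhd y :&: C i \subset nbhd x :&: C i).
End GraphDefs.

Inductive cw_expr : Type :=
| CWVtx of nat
| CWUnion of cw_expr & cw_expr
| CWJoin of nat & nat & cw_expr
| CWRename of nat & nat & cw_expr.

(* Vertices of the constructed graph are addressed by paths (seq bool) in the
   expression tree. *)
Fixpoint cw_vertices (e : cw_expr) : seq (seq bool) :=
  match e with
  | CWVtx _ => [:: [::]]
  | CWUnion e1 e2 => map (cons false) (cw_vertices e1) ++ map (cons true) (cw_vertices e2)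
  | CWJoin _ _ e' => cw_vertices e'
  | CWRename _ _ e' => cw_vertices e'
  end.

Fixpoint cw_label (e : cw_expr) (v : seq bool) : nat :=
  match e with
  | CWVtx i => i
  | CWUnion e1 e2 =>
      match v with
      | b :: w => if b then cw_label e2 w else cw_label e1 w
      | [::] => 0
      end
  | CWJoin _ _ e' => cw_label e' v
  | CWRename i j e' => if cw_label e' v == i then j else cw_label e' v
  end.

Fixpoint cw_edge (e : cw_expr) (u v : seq bool) : bool :=
  match e with
  | CWVtx _ => false
  | CWUnion e1 e2 =>
      match u, v with
      | b :: u', c :: v' =>
          (b == c) && (if b then cw_edge e2 u' v' else cw_edge e1 u' v')
      | _, _ => false
      end
  | CWJoin i j e' =>
      cw_edge e' u v ||
      ((i != j) && (((cw_label e' u == i) && (cw_label e' v == j)) ||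
                    ((cw_label e' u == j) && (cw_label e' v == i))))
  | CWRename _ _ e' => cw_edge e' u v
  end.

Fixpoint cw_labels (e : cw_expr) : seq nat :=
  match e with
  | CWVtx i => [:: i]
  | CWUnion e1 e2 => cw_labels e1 ++ cw_labels e2
  | CWJoin i j e' => i :: j :: cw_labels e'
  | CWRename i j e' => i :: j :: cw_labels e'
  end.

Definition cw_num_labels (e : cw_expr) : nat := size (undup (cw_labels e)).

Definition cw_realizes (T : finType) (adj : rel T) (L : T -> nat) (e : cw_expr) : Prop :=
  exists h : T -> seq bool,
    injective h /\
    perm_eq (map h (enum T)) (cw_vertices e) /\
    (forall x y, adj x y = cw_edge e (h x) (h y)) /\
    (forall x, L x = cw_label e (h x)).

Definition cwd_le (T : finType) (adj : rel T) (L : T -> nat) (k : nat) : Prop :=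
  exists e : cw_expr, cw_num_labels e <= k /\ cw_realizes adj L e.

(* Main.v *)
Require Import Defs.
From mathcomp Require Import all_boot zify.
Set Implicit Arguments. Unset Strict Implicit. Unset Printing Implicit Defensive.

Definition RR (T : finType) (S : {set T}) (E : rel T) (lab : T -> nat) (e : cw_expr) : Prop :=
  exists h : T -> seq bool, {in S &, injective h} /\
    perm_eq (map h (enum S)) (cw_vertices e) /\
    {in S &, forall x y, E x y = cw_edge e (h x) (h y)} /\
    {in S, forall x, lab x = cw_label e (h x)}.

Lemma RR_ext (T : finType) S (E E2 : rel T) lab lab2 e :
  RR S E lab e -> {in S &, forall x y, E2 x y = E x y} -> {in S, forall x, lab2 x = lab x} ->
  RR S E2 lab2 e.
Proof.
move=> [h [hi [hp [he hl]]]] HE Hl; exists h; split=> //; split=> //; split.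
- by move=> x y xS yS; rewrite HE // he.
- by move=> x xS; rewrite Hl // hl.
Qed.

Lemma RR_vtx (T : finType) (v : T) (E : rel T) lab l :
  ~~ E v v -> lab v = l -> RR [set v] E lab (CWVtx l).
Proof.
move=> Ev lv; exists (fun _ => [::]); split; first by move=> x y /set1P-> /set1P->.
split; first by rewrite enum_set1.
split; first by move=> x y /set1P-> /set1P-> /=; apply/negbTE.
by move=> x /set1P->.
Qed.

Lemma RR_join (T : finType) S (E E2 : rel T) lab e i j :
  RR S E lab e -> i != j ->
  {in S &, forall x y, E2 x y = E x y || ((lab x == i) && (lab y == j)) || ((lab x == j) && (lab y == i))} ->
  RR S E2 lab (CWJoin i j e).
Proof.
move=> [h [hi [hp [he hl]]]] ij HE; exists h; split=> //; split=> //; split=> //.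
move=> x y xS yS /=; rewrite HE // he // ij /= -!hl //.
by rewrite orbA.
Qed.

Lemma RR_rename (T : finType) S (E : rel T) lab lab2 e i j :
  RR S E lab e ->
  {in S, forall x, lab2 x = if lab x == i then j else lab x} ->
  RR S E lab2 (CWRename i j e).
Proof.
move=> [h [hi [hp [he hl]]]] Hl; exists h; split=> //; split=> //; split=> //.
by move=> x xS /=; rewrite Hl // hl.
Qed.

Lemma RR_union (T : finType) S1 S2 (E : rel T) lab e1 e2 :
  RR S1 E lab e1 -> RR S2 E lab e2 -> (forall x, x \in S1 -> x \notin S2) ->
  (forall x y, x \in S1 -> y \in S2 -> ~~ E x y /\ ~~ E y x) ->
  RR (S1 :|: S2) E lab (CWUnion e1 e2).
Proof.
move=> [h1 [hi1 [hp1 [he1 hl1]]]] [h2 [hi2 [hp2 [he2 hl2]]]] dis cross.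
pose h x := if x \in S1 then false :: h1 x else true :: h2 x.
have inS x : x \in S1 :|: S2 -> (x \in S1) || (x \in S2) by rewrite inE.
have S2n x : x \in S2 -> x \notin S1.
  by move=> xS2; apply/negP=> xS1; move: (dis x xS1); rewrite xS2.
exists h; split.
  move=> x y /inS/orP[xS|xS] /inS/orP[yS|yS]; rewrite /h.
  - by rewrite xS yS => -[] /hi1; apply.
  - by rewrite xS (negbTE (S2n _ yS)).
  - by rewrite yS (negbTE (S2n _ xS)).
  - by rewrite (negbTE (S2n _ xS)) (negbTE (S2n _ yS)) => -[] /hi2; apply.
split.
  have pe : perm_eq (enum (S1 :|: S2)) (enum S1 ++ enum S2).
    apply: uniq_perm; first exact: enum_uniq.
      rewrite cat_uniq !enum_uniq /= andbT; apply/hasPn=> x; rewrite !mem_enum.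
      by move/S2n.
    by move=> x; rewrite mem_cat !mem_enum inE.
  apply: perm_trans (perm_map h pe) _.
  rewrite map_cat /=; apply: perm_cat.
    have -> : map h (enum S1) = map (cons false) (map h1 (enum S1)).
      rewrite -map_comp; apply/eq_in_map=> x; rewrite mem_enum /h /= => ->.
      by [].
    by rewrite perm_map.
  have -> : map h (enum S2) = map (cons true) (map h2 (enum S2)).
    rewrite -map_comp; apply/eq_in_map=> x; rewrite mem_enum /h /= => xS.
    by rewrite (negbTE (S2n _ xS)).
  by rewrite perm_map.
split.
  move=> x y /inS/orP[xS|xS] /inS/orP[yS|yS]; rewrite /h /=.
  - by rewrite xS yS /= he1.
  - by rewrite xS (negbTE (S2n _ yS)) /=; case: (cross x y xS yS)=> /negbTE.
  - by rewrite yS (negbTE (S2n _ xS)) /=; case: (cross y x yS xS)=> _ /negbTE.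
  - by rewrite (negbTE (S2n _ xS)) (negbTE (S2n _ yS)) /= he2.
move=> x /inS/orP[xS|xS]; rewrite /h /=.
  by rewrite xS hl1.
by rewrite (negbTE (S2n _ xS)) hl2.
Qed.

Lemma RR_add (T : finType) S (v : T) (E : rel T) lab lab2 e l a1 a2 l' :
 RR S E lab e -> v \notin S -> ~~ E v v -> {in S, forall x, lab x != l} -> l != a1 -> l != a2 ->
 {in S, forall x, E v x = (lab x == a1) || (lab x == a2)} -> {in S, forall x, E x v = E v x} ->
 {in S, forall x, lab2 x = lab x} -> lab2 v = l' ->
 RR (S :|: [set v]) E lab2 (CWRename l l' (CWJoin l a1 (CWJoin l a2 (CWUnion e (CWVtx l))))).
Proof.
move=> He vS Evv Hl la1 la2 Ev Esym Hl2 l2v.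
pose E0 := fun x y => if (x == v) || (y == v) then false else E x y.
pose lab0 := fun x => if x == v then l else lab x.
have nv x : x \in S -> (x == v) = false.
  by move=> xS; apply/negbTE; apply: contraNneq vS => <-.
have R0 : RR S E0 lab0 e.
  by apply: RR_ext He _ _ => [x y xS yS|x xS]; rewrite /E0 /lab0 ?nv.
have RV : RR [set v] E0 lab0 (CWVtx l) by apply: RR_vtx; rewrite /E0 /lab0 eqxx.
have RU := RR_union R0 RV.
have RU' : RR (S :|: [set v]) E0 lab0 (CWUnion e (CWVtx l)).
  apply: RU.
    by move=> x xS; rewrite inE nv.
  by move=> x y xS /set1P ->; rewrite /E0 eqxx orbT.
have RJ1 := RR_join (E2 := fun x y => E0 x y || ((lab0 x == l) && (lab0 y == a2)) || ((lab0 x == a2) && (lab0 y == l))) RU' la2 (fun _ _ _ _ => erefl).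
have RJ2 := RR_join (E2 := fun x y => (E0 x y || ((lab0 x == l) && (lab0 y == a2)) || ((lab0 x == a2) && (lab0 y == l))) || ((lab0 x == l) && (lab0 y == a1)) || ((lab0 x == a1) && (lab0 y == l))) RJ1 la1 (fun _ _ _ _ => erefl).
have RN := RR_rename (lab2 := fun x => if lab0 x == l then l' else lab0 x) RJ2 (fun _ _ => erefl).
apply: RR_ext RN _ _.
  move=> x y; rewrite !inE => /orP[xS|/eqP->] /orP[yS|/eqP->]; rewrite /E0 /lab0 ?eqxx ?nv //=.
  - by rewrite (negbTE (Hl _ xS)) (negbTE (Hl _ yS)) /= ?andbF ?orbF.
  - rewrite (negbTE (Hl _ xS)) Esym // Ev //=.
    by rewrite ?andbT ?andbF ?orbF; do 2 case: (_ == _).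
  - rewrite (negbTE (Hl _ yS)) Ev //=.
    by rewrite ?andbT ?andbF ?orbF; do 2 case: (_ == _).
  - by rewrite (negbTE Evv) (negbTE la2) (negbTE la1).
move=> x; rewrite !inE => /orP[xS|/eqP->]; rewrite /lab0.
  by rewrite nv // (negbTE (Hl _ xS)) Hl2.
by rewrite !eqxx.
Qed.

Definition okL (ls : seq nat) (e : cw_expr) := all (fun l => l \in ls) (cw_labels e).

Lemma setD1U (T : finType) (S : {set T}) v : v \in S -> S :\ v :|: [set v] = S.
Proof. by move=> vS; rewrite setUC setD1K. Qed.

Lemma setD1_empty (T : finType) (S : {set T}) v : v \in S -> S :\ v = set0 -> S = [set v].
Proof. by move=> vS h; rewrite -(setD1K vS) h setU0. Qed.

Lemma Qlemma (T : finType) (adj : rel T) (Hsym : symmetric adj) (Hirr : irreflexive adj)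
  (B' C' : {set T}) (sq : seq T) (p q r s : nat) :
  (forall x, x \in B' -> x \notin C') -> is_clique adj B' -> is_clique adj C' ->
  sq =i B' ->
  (forall x y, x \in sq -> y \in sq -> index x sq <= index y sq ->
       nbhd adj y :&: C' \subset nbhd adj x :&: C') ->
  r != p -> q != r -> q != p -> s != r -> s != p ->
  forall n (S : {set T}), #|S| <= n -> S != set0 -> S \subset B' :|: C' ->
  exists e, okL [:: p; q; r; s] e /\ RR S adj (fun x => if x \in C' then r else p) e.
Proof.
move=> dBC cqB cqC Hs nest rp qr qp sr sp.
set labQ := fun x => if x \in C' then r else p.
have labQv x : (labQ x == r) || (labQ x == p) by rewrite /labQ; case: (x \in C'); rewrite eqxx ?orbT.
have labQq x : labQ x != q by rewrite /labQ; case: (x \in C'); rewrite eq_sym.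
have labQs x : labQ x != s by rewrite /labQ; case: (x \in C'); rewrite eq_sym.
have inQ (S : {set T}) x : S \subset B' :|: C' -> x \in S -> x \notin C' -> x \in B'.
  move=> sub xS xC; have := subsetP sub x xS.
  by rewrite inE (negbTE xC) orbF.
elim=> [|n IH] S.
  by rewrite leqn0 cards_eq0 => /eqP -> /eqP.
move=> cardS S0 SQ.
have Sv v : v \in S -> S :\ v != set0 -> #|S :\ v| <= n /\ S :\ v \subset B' :|: C'.
  move=> vS _; split.
    by move: cardS; rewrite (cardsD1 v S) vS add1n ltnS.
  by apply: subset_trans SQ; apply: subD1set.
case: (boolP [exists c in S :&: C', [forall b in S :&: B', ~~ adj c b]]).
  move=> /exists_inP[c]; rewrite inE => /andP[cS cC] /forall_inP Hc.
  have labc : labQ c = r by rewrite /labQ cC.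
  case: (eqVneq (S :\ c) set0) => [E0|Sn0].
    rewrite (setD1_empty cS E0); exists (CWVtx r); split; first by rewrite /okL /= !inE eqxx !orbT.
    by apply: RR_vtx; rewrite ?Hirr.
  have [c1 c2] := Sv c cS Sn0.
  have [e [oke Re]] := IH _ c1 Sn0 c2.
  exists (CWRename q r (CWJoin q r (CWJoin q r (CWUnion e (CWVtx q))))).
  split.
    by move: oke; rewrite /okL /= all_cat => -> /=; rewrite !inE !eqxx ?orbT.
  rewrite -(setD1U cS).
  apply: (RR_add Re) => //.
  - by rewrite setD11.
  - by rewrite Hirr.
  - move=> x; rewrite !inE => /andP[xc xS]; rewrite orbb.
    case: (boolP (x \in C')) => xC.
      rewrite /labQ xC eqxx. have h := cqC c x cC xC. by rewrite h // eq_sym.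
    rewrite /labQ (negbTE xC) eq_sym (negbTE rp).
    by apply/negbTE; apply: Hc; rewrite !inE xS (inQ S).
move=> Hn.
have Hnb c : c \in S -> c \in C' -> exists2 b', b' \in S :&: B' & adj c b'.
  move=> cS cC.
  case: (boolP [exists b in S :&: B', adj c b]) => [/exists_inP[b' ? ?]|Hnb]; first by exists b'.
  exfalso; apply: (negP Hn); apply/exists_inP; exists c; first by rewrite inE cS cC.
  apply/forall_inP => b bSB; apply: contraNN Hnb => h; apply/exists_inP; by exists b.
have [b0 b0SB] : exists b0, b0 \in S :&: B'.
  case/set0Pn: S0 => x xS.
  case: (boolP (x \in C')) => xC.
    by have [b' ? _] := Hnb x xS xC; exists b'.
  by exists x; rewrite inE xS (inQ S).
case: (arg_minnP (fun x => index x sq) b0SB) => b bSB bmin.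
have /setIP[bS bB] : b \in S :&: B' := bSB.
have bC : b \notin C' by apply: dBC.
have adjb x : x \in S -> x != b -> adj b x.
  move=> xS xb.
  case: (boolP (x \in C')) => xC.
    have [b' b'SB ab'] := Hnb x xS xC.
    move: (b'SB); rewrite inE => /andP[_ b'B].
    have := nest b b'; rewrite !Hs => /(_ bB b'B (bmin _ b'SB)) /subsetP /(_ x).
    by rewrite !inE Hsym ab' xC /= => /(_ isT) /andP[].
  by apply: cqB; rewrite // ?(inQ S) // eq_sym.
have labb : labQ b = p by rewrite /labQ (negbTE bC).
case: (eqVneq (S :\ b) set0) => [E0|Sn0].
  rewrite (setD1_empty bS E0); exists (CWVtx p); split; first by rewrite /okL /= !inE eqxx.
  by apply: RR_vtx; rewrite ?Hirr.
have [c1 c2] := Sv b bS Sn0.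
have [e [oke Re]] := IH _ c1 Sn0 c2.
exists (CWRename s p (CWJoin s r (CWJoin s p (CWUnion e (CWVtx s))))).
split.
  by move: oke; rewrite /okL /= all_cat => -> /=; rewrite !inE !eqxx ?orbT.
rewrite -(setD1U bS).
apply: (RR_add Re) => //.
- by rewrite setD11.
- by rewrite Hirr.
- move=> x; rewrite !inE => /andP[xb xS]; rewrite labQv.
  by apply: adjb.
Qed.

Lemma Glemma (t : nat) (T : finType) (adj : rel T)
    (Hsym : symmetric adj) (Hirr : irreflexive adj)
    (B C : 'I_t -> {set T}) (L : T -> nat) (p q r s : nat) :
  is_spike_partition adj B C ->
  (forall i b, b \in B i -> L b = p) ->
  (forall i c, c \in C i -> L c = q) ->
  p != q -> r != p -> q != r -> s != r -> s != p ->
  forall n (S : {set T}), #|S| <= n -> S != set0 ->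
  exists e, okL [:: p; q; r; s] e /\ RR S adj L e.
Proof.
move=> [Hne [Hcov [Hdis [HBC [Hadj Hord]]]]] LB LC pq rp qr sr sp.
have qp : q != p by rewrite eq_sym.
have rq : r != q by rewrite eq_sym.
have BnC i j x : x \in B i -> x \in C j = false by move=> xB; apply: (disjointFr (HBC i j)).
elim=> [|n IH] S.
  by rewrite leqn0 cards_eq0 => /eqP -> /eqP.
move=> cardS S0.
case/set0Pn: (S0) => x xS.
have [i xi] := Hcov x.
set Qi := B i :|: C i.
set Si := S :&: Qi.
set S' := S :\: Qi.
have [_ [_ [cqB cqC]]] := Hne i.
have [sq [_ [Hs nest]]] := Hord i.
set labQ := fun x => if x \in C i then r else p.
have xSi : x \in Si by rewrite /Si /Qi !inE xS.
have Si0 : Si != set0 by apply/set0Pn; exists x.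
have [ei [okei Rei]] := Qlemma Hsym Hirr (fun y yB => negbT (BnC i i y yB)) cqB cqC Hs nest
   rp qr qp sr sp (leqnn #|Si|) Si0 (subsetIr S Qi).
have LQ y : y \in Qi -> L y = if labQ y == r then q else labQ y.
  rewrite inE /labQ => /orP[yB|yC].
    by rewrite (BnC i i y yB) eq_sym (negbTE rp) (LB i).
  by rewrite yC eqxx (LC i).
have SU : S' :|: Si = S by rewrite setUC setID.
case: (eqVneq S' set0) => [S'0|S'n0].
  exists (CWRename r q ei); split.
    by move: okei; rewrite /okL /= => -> /=; rewrite !inE !eqxx ?orbT.
  rewrite -SU S'0 set0U.
  apply: RR_rename Rei _ => y; rewrite inE => /andP[_ yQ]; exact: LQ.
have cS' : #|S'| <= n.
  have : S' \subset S :\ x.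
    apply/subsetP => y; rewrite !inE => /andP[yQ yS]; rewrite yS andbT.
    by apply: contraNneq yQ => ->; rewrite inE in xSi; case/andP: xSi.
  move/subset_leq_card; move: cardS; rewrite (cardsD1 x S) xS add1n ltnS.
  by move=> h1 h2; apply: leq_trans h2 h1.
have [e' [oke' Re']] := IH S' cS' S'n0.
exists (CWRename r q (CWJoin q r (CWUnion e' ei))); split.
  by move: oke' okei; rewrite /okL /= all_cat => -> -> /=; rewrite !inE !eqxx ?orbT.
have LS' y : y \in S' -> exists2 j, j != i & ((y \in B j) && (L y == p)) || ((y \in C j) && (L y == q)).
  move=> /setDP[_ yQ]; have [j yj] := Hcov y; exists j.
    by apply: contraNneq yQ => ji; rewrite /Qi -ji inE.
  case/orP: yj => yj; rewrite yj /=.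
    by rewrite (LB j) ?eqxx.
  by rewrite (LC j) ?eqxx ?orbT.
have Lr y : y \in S' -> (L y == r) = false.
  move=> /LS'[j _] /orP[/andP[_ /eqP->]|/andP[_ /eqP->]]; apply/negbTE.
    by rewrite eq_sym.
  by rewrite eq_sym.
have cross y z : y \in S' -> z \in Si -> adj y z = (L y == q) && (labQ z == r).
  move=> /LS'[j ji yj] /setIP[_]; rewrite /Qi inE /labQ => zi.
  have [aBB [cCC aBC]] := Hadj j i ji.
  have [_ [_ aBC']] := Hadj i j (negbT (introF eqP (fun h => (negP ji) (introT eqP (esym h))))).
  case/orP: yj => /andP[yB /eqP->]; case/orP: zi => zi.
  - by rewrite (BnC i i z zi) (negbTE pq); apply/negbTE; apply: aBB.
  - by rewrite zi (negbTE pq); apply/negbTE; apply: aBC.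
  - by rewrite (BnC i i z zi) [p == r]eq_sym (negbTE rp) andbF Hsym; apply/negbTE; apply: aBC'.
  - by rewrite zi !eqxx; apply: cCC.
pose lab0 := fun y => if y \in Qi then labQ y else L y.
pose E0 := fun y z => adj y z && ((y \in Qi) == (z \in Qi)).
have R1 : RR S' E0 lab0 e'.
  apply: RR_ext Re' _ _ => [y z /setDP[_ yQ] /setDP[_ zQ]|y /setDP[_ yQ]]; rewrite /E0 /lab0.
    by rewrite (negbTE yQ) (negbTE zQ) andbT.
  by rewrite (negbTE yQ).
have R2 : RR Si E0 lab0 ei.
  apply: RR_ext Rei _ _ => [y z /setIP[_ yQ] /setIP[_ zQ]|y /setIP[_ yQ]]; rewrite /E0 /lab0.
    by rewrite yQ zQ andbT.
  by rewrite yQ.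
have RU := RR_union R1 R2.
have RU' : RR (S' :|: Si) E0 lab0 (CWUnion e' ei).
  apply: RU.
    by move=> y /setDP[_ yQ]; apply/setIP => -[_]; apply/negP.
  move=> y z /setDP[_ yQ] /setIP[_ zQ]; rewrite /E0 (negbTE yQ) zQ.
  by rewrite !andbF.
have RJ := RR_join (E2 := fun y z => E0 y z || ((lab0 y == q) && (lab0 z == r)) || ((lab0 y == r) && (lab0 z == q))) RU' qr (fun _ _ _ _ => erefl).
have RN := RR_rename (lab2 := fun y => if lab0 y == r then q else lab0 y) RJ (fun _ _ => erefl).
rewrite -SU.
apply: RR_ext RN _ _.
  move=> y z /setUP[yS'|ySi] /setUP[zS'|zSi].
  - move: (yS') (zS') => /setDP[_ yQ] /setDP[_ zQ].
    by rewrite /E0 /lab0 (negbTE yQ) (negbTE zQ) (Lr _ zS') (Lr _ yS') !andbF !orbF andbT.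
  - move: (yS') (zSi) => /setDP[_ yQ] /setIP[_ zQ].
    by rewrite /E0 /lab0 (negbTE yQ) zQ (Lr _ yS') cross // andbF /= orbF.
  - move: (ySi) (zS') => /setIP[_ yQ] /setDP[_ zQ].
    rewrite /E0 /lab0 (negbTE zQ) yQ (Lr _ zS') Hsym cross // andbF /= andbC.
    by case: (labQ y == r); case: (L z == q).
  - move: (ySi) (zSi) => /setIP[_ yQ] /setIP[_ zQ].
    have lq w : (labQ w == q) = false by rewrite /labQ; case: (w \in C i); apply/negbTE; rewrite eq_sym.
    by rewrite /E0 /lab0 yQ zQ !lq eqxx andbT !andbF !orbF.
move=> y /setUP[yS'|ySi].
  move: (yS') => /setDP[_ yQ].
  by rewrite /lab0 (negbTE yQ) (Lr _ yS').
move: (ySi) => /setIP[_ yQ].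
by rewrite /lab0 yQ LQ.
Qed.

Theorem proposition8p5 (t : nat) (T : finType) (adj : rel T)
    (Hsym : symmetric adj) (Hirr : irreflexive adj)
    (B C : 'I_t -> {set T}) (L : T -> nat) (p q : nat) :
  0 < t ->
  is_spike_partition adj B C ->
  p != q ->
  (forall i b, b \in B i -> L b = p) ->
  (forall i c, c \in C i -> L c = q) ->
  cwd_le adj L 4.
Proof.
move=> t0 Hsp pq LB LC.
have rp : p + q + 1 != p by apply/eqP; lia.
have qr : q != p + q + 1 by apply/eqP; lia.
have sr : p + q + 2 != p + q + 1 by apply/eqP; lia.
have sp : p + q + 2 != p by apply/eqP; lia.
have T0 : [set: T] != set0.
  have [Hne _] := Hsp.
  have [/set0Pn[x _] _] := Hne (Ordinal t0).
  by apply/set0Pn; exists x.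
have [e [oke [h [hi [hp [he hl]]]]]] :=
  Glemma Hsym Hirr Hsp LB LC pq rp qr sr sp (leqnn #|[set: T]|) T0.
exists e; split.
  rewrite /cw_num_labels.
  have -> : 4 = size [:: p; q; p + q + 1; p + q + 2] by [].
  apply: uniq_leq_size; first exact: undup_uniq.
  by move=> l; rewrite mem_undup; move/allP: oke; apply.
exists h; split; first by move=> x y hxy; apply: hi; rewrite ?inE.
split; first by rewrite enumT -enum_setT.
split; first by move=> x y; apply: he; rewrite inE.
by move=> x; apply: hl; rewrite inE.
Qed.
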